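(* For every $n\ge1$, $\mathcal{C}(T^{mb}_n)=c_n$; that is, the maximally balanced tree with $n$ leaves has the minimum Colless index among all bifurcating trees with $n$ leaves.
   Context: Bifurcating trees: rooted trees in which every internal node has exactly two children; $\mathcal{T}_n$ is the set of isomorphism classes of bifurcating trees with $n$ leaves. For a node $w$, $\kappa_T(w)$ is its number of descendant leaves. The Colless index is $\mathcal{C}(T)=\sum_{v}|\kappa_T(v_1)-\kappa_T(v_2)|$, summed over internal nodes $v$ with children $v_1,v_2$; $c_n=\min\{\mathcal{C}(T):T\in\mathcal{T}_n\}$. A bifurcating tree is maximally balanced if for every internal node the numbers of descendant leaves of its two children differ by at most 1; $T^{mb}_n$ denotes the unique maximally balanced tree with $n$ leaves. *)

(* Defs.v *)
From mathcomp Require Import all_boot.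
Set Implicit Arguments. Unset Strict Implicit. Unset Printing Implicit Defensive.

(* Trees are represented as plain terms; isomorphism classes are irrelevant
   for the statement since leaf counts and the Colless index are invariant
   under swapping children. *)
Inductive btree : Type :=
| Leaf : btree
| Node : btree -> btree -> btree.

Fixpoint leaves (t : btree) : nat :=
  match t with
  | Leaf => 1
  | Node l r => leaves l + leaves r
  end.

Definition absdiff (a b : nat) : nat := (a - b) + (b - a).

Fixpoint colless (t : btree) : nat :=
  match t with
  | Leaf => 0
  | Node l r => absdiff (leaves l) (leaves r) + colless l + colless r
  end.

Fixpoint max_balanced (t : btree) : bool :=
  match t with
  | Leaf => true
  | Node l r => [&& absdiff (leaves l) (leaves r) <= 1,
                   max_balanced l & max_balanced r]
  end.

(* c_n is the minimum of colless over trees with n leaves; "colless T = c_n"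
   for a tree T with n leaves is expressed as: colless T is a lower bound of
   colless over all trees with n leaves. *)
Definition is_min_colless (n : nat) (T : btree) : Prop :=
  leaves T = n /\ forall T' : btree, leaves T' = n -> colless T <= colless T'.

(* Main.v *)
Require Import Defs.
From mathcomp Require Import all_boot.
From mathcomp Require Import zify.

Fixpoint fb (k n : nat) : nat :=
  match k with
  | 0 => 0
  | k'.+1 => if n <= 1 then 0 else n %% 2 + fb k' (n - n %/ 2) + fb k' (n %/ 2)
  end.

Lemma fb_stable k : forall k' n, n <= k -> n <= k' -> fb k n = fb k' n.
Proof.
elim: k => [|k IH] [|k'] n /= H1 H2 //.
- have -> : n = 0 by lia. by [].
- have -> : n = 0 by lia. by [].
- case: ifP => // Hn. rewrite (IH k' (n - n %/ 2)); try lia.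
  by rewrite (IH k' (n %/ 2)); lia.
Qed.

Definition f n := fb n n.

Lemma f0 : f 0 = 0. Proof. by []. Qed.
Lemma f1 : f 1 = 0. Proof. by []. Qed.
Lemma f_rec n : 2 <= n -> f n = n %% 2 + f (n - n %/ 2) + f (n %/ 2).
Proof.
move=> Hn. rewrite /f. case: n Hn => [|n] Hn //=.
have -> : (n.+1 <= 1) = false by lia.
rewrite (@fb_stable n (n.+1 - n.+1 %/ 2)); try lia.
by rewrite (@fb_stable n (n.+1 %/ 2)); lia.
Qed.

Lemma f_split n p q : 2 <= n -> p + q = n -> absdiff p q <= 1 ->
  f n = absdiff p q + f p + f q.
Proof.
move=> Hn Hpq Hd. rewrite (@f_rec n Hn). rewrite /absdiff in Hd *.
have [[-> ->]|[-> ->]] : (p = n - n %/ 2 /\ q = n %/ 2) \/ (q = n - n %/ 2 /\ p = n %/ 2) by lia.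
all: lia.
Qed.

Lemma main n : forall a b, a + b = n -> f n <= absdiff a b + f a + f b.
Proof.
elim/ltn_ind: n => n IH.
have key : forall a b, a + b = n -> b <= a -> f n <= absdiff a b + f a + f b.
  move=> a b Hab Hba. rewrite /absdiff.
  have [Hb0|Hb] := eqVneq b 0.
    subst b; rewrite -Hab addn0; lia.
  have [Hb1|Hb1] := eqVneq b 1.
    subst b.
    have [Ha1|Ha1] := eqVneq a 1.
      subst a; subst n. rewrite (@f_rec 2) //=.
    set k := a %/ 2.
    have IHk := IH (k.+1) ltac:(lia) k 1 ltac:(lia).
    rewrite /absdiff f1 in IHk.
    have [Ho|Ho] : a = 2 * k \/ a = 2 * k + 1 by lia.
    + have E1 := @f_split n (k.+1) k ltac:(lia) ltac:(lia) ltac:(rewrite /absdiff; lia).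
      have E2 := @f_split a k k ltac:(lia) ltac:(lia) ltac:(rewrite /absdiff; lia).
      rewrite /absdiff in E1 E2. rewrite f1. lia.
    + have E1 := @f_split n (k.+1) (k.+1) ltac:(lia) ltac:(lia) ltac:(rewrite /absdiff; lia).
      have E2 := @f_split a (k.+1) k ltac:(lia) ltac:(lia) ltac:(rewrite /absdiff; lia).
      rewrite /absdiff in E1 E2. rewrite f1. lia.
  set a1 := a - a %/ 2. set a2 := a %/ 2. set b1 := b - b %/ 2. set b2 := b %/ 2.
  have Ea := @f_split (a) (a1) (a2) ltac:(lia) ltac:(lia) ltac:(rewrite /absdiff; lia).
  have Eb := @f_split (b) (b1) (b2) ltac:(lia) ltac:(lia) ltac:(rewrite /absdiff; lia).
  have En := @f_split (n) (a1 + b2) (a2 + b1) ltac:(lia) ltac:(lia) ltac:(rewrite /absdiff; lia).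
  have I1 := IH (a1 + b2) ltac:(lia) a1 b2 erefl.
  have I2 := IH (a2 + b1) ltac:(lia) a2 b1 erefl.
  rewrite /absdiff in Ea Eb En I1 I2.
  lia.
move=> a b Hab. have [Hba|Hab'] := leqP b a; first exact: key.
have := key b a ltac:(lia) ltac:(lia). rewrite /absdiff. lia.
Qed.

Lemma colless_lb T : f (leaves T) <= colless T.
Proof.
elim: T => [|l IHl r IHr] //=.
have := @main (leaves l + leaves r) _ _ erefl. lia.
Qed.

Lemma leaves_pos T : 1 <= leaves T.
Proof. elim: T => //= l Hl r Hr; lia. Qed.

Lemma colless_mb T : max_balanced T -> colless T = f (leaves T).
Proof.
elim: T => [|l IHl r IHr] //= /andP [Hd /andP [Hl Hr]].
rewrite IHl // IHr //.
have := leaves_pos l; have := leaves_pos r => H1 H2.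
rewrite (@f_split (leaves l + leaves r) (leaves l) (leaves r)) //; lia.
Qed.

Lemma exists_mb n : 1 <= n -> exists T, leaves T = n /\ max_balanced T.
Proof.
elim/ltn_ind: n => n IH Hn.
have [Hn1|Hn1] := eqVneq n 1; first by subst; exists Leaf.
have [T1 [E1 B1]] := IH (n - n %/ 2) ltac:(lia) ltac:(lia).
have [T2 [E2 B2]] := IH (n %/ 2) ltac:(lia) ltac:(lia).
exists (Node T1 T2); rewrite /= E1 E2 B1 B2; split; first lia.
rewrite /absdiff. apply/andP; split => //; lia.
Qed.

Theorem theorem1 (n : nat) (hn : 1 <= n) :
  (exists T : btree, leaves T = n /\ max_balanced T) /\
  (forall T : btree, leaves T = n -> max_balanced T -> is_min_colless n T).
Proof.
split; first exact: exists_mb.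
move=> T HT HB; split => // T' HT'.
rewrite (@colless_mb T HB) HT -HT'. exact: colless_lb.
Qed.
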